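(* There exist constants $M>0$ and $k_0>0$ such that for all $k$ on the imaginary axis $k\in i\mathbb{R}$ with $|k|>k_0$, $$\Big|\frac{y(1;k)}{y'(1;k)}\Big|<M\qquad\text{and}\qquad \Big|\frac{j_0(k\tilde n_0)}{\partial_r j_0(k\tilde n_0 r)|_{r=1}}\Big|<M.$$
   Context: Let $\epsilon_0,\gamma_0>0$ be constants and $\epsilon_1,\gamma_1:[0,1]\to(0,\infty)$ twice differentiable; $k\in\mathbb{C}$. Put $\tilde n_0=(\epsilon_0+i\gamma_0/k)^{1/2}$ and $j_0(z)=\sin z/z$. Let $y(r;k)$ be the solution of $y''+k^2(\epsilon_1(r)+i\gamma_1(r)/k)y=0$ on $[0,1]$, $y(0)=0$, $y'(0)=1$, where prime denotes $d/dr$. *)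

(* Defs.v *)
From Stdlib Require Import Reals.
Open Scope R_scope.

Definition Cx : Type := (R * R)%type.
Definition Re (z : Cx) : R := fst z.
Definition Im (z : Cx) : R := snd z.
Definition RtoC (x : R) : Cx := (x, 0).
Definition Ci : Cx := (0, 1).
Definition Cadd (z w : Cx) : Cx := (Re z + Re w, Im z + Im w).
Definition Copp (z : Cx) : Cx := (- Re z, - Im z).
Definition Cmul (z w : Cx) : Cx :=
  (Re z * Re w - Im z * Im w, Re z * Im w + Im z * Re w).
Definition Cinv (z : Cx) : Cx :=
  (Re z / (Re z ^ 2 + Im z ^ 2), - Im z / (Re z ^ 2 + Im z ^ 2)).
Definition Cdiv (z w : Cx) : Cx := Cmul z (Cinv w).
Definition Cmod (z : Cx) : R := sqrt (Re z ^ 2 + Im z ^ 2).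

(* principal square root (branch cut on the negative real axis, Re >= 0) *)
Definition Csqrt (z : Cx) : Cx :=
  (sqrt ((Cmod z + Re z) / 2),
   (if Rle_dec 0 (Im z) then 1 else -1) * sqrt ((Cmod z - Re z) / 2)).

Definition Csin (z : Cx) : Cx :=
  (sin (Re z) * cosh (Im z), cos (Re z) * sinh (Im z)).

Definition j0 (z : Cx) : Cx := Cdiv (Csin z) z.

Definition Cderiv_lim (f : R -> Cx) (r : R) (d : Cx) : Prop :=
  derivable_pt_lim (fun s => Re (f s)) r (Re d) /\
  derivable_pt_lim (fun s => Im (f s)) r (Im d).

Definition twice_diff_01 (f : R -> R) : Prop :=
  exists f1 f2 : R -> R, forall r, 0 <= r <= 1 ->
    derivable_pt_lim f r (f1 r) /\ derivable_pt_lim f1 r (f2 r).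

(* (y, y1) solves y'' + k^2 (eps1 + i gam1/k) y = 0 on [0,1], y(0)=0, y'(0)=1,
   with y1 = y' *)
Definition is_sol (eps1 gam1 : R -> R) (k : Cx) (y y1 : R -> Cx) : Prop :=
  y 0 = RtoC 0 /\ y1 0 = RtoC 1 /\
  forall r, 0 <= r <= 1 ->
    Cderiv_lim y r (y1 r) /\
    Cderiv_lim y1 r
      (Copp (Cmul (Cmul (Cmul k k)
                        (Cadd (RtoC (eps1 r)) (Cdiv (Cmul Ci (RtoC (gam1 r))) k)))
                  (y r))).

Definition n0t (eps0 gam0 : R) (k : Cx) : Cx :=
  Csqrt (Cadd (RtoC eps0) (Cdiv (Cmul Ci (RtoC gam0)) k)).

(* Main.v *)
Require Import Defs.
From Stdlib Require Import Reals Lra Psatz FunctionalExtensionality.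
Open Scope R_scope.

Lemma dmul (f g : R -> R) f' g' x : derivable_pt_lim f x f' -> derivable_pt_lim g x g' ->
  derivable_pt_lim (fun r => f r * g r) x (f' * g x + f x * g').
Proof. intros; apply (derivable_pt_lim_mult f g x f' g'); auto. Qed.

Lemma dminus (f g : R -> R) f' g' x : derivable_pt_lim f x f' -> derivable_pt_lim g x g' ->
  derivable_pt_lim (fun r => f r - g r) x (f' - g').
Proof. intros; apply (derivable_pt_lim_minus f g x f' g'); auto. Qed.

Lemma dext (f : R -> R) x l l' : derivable_pt_lim f x l -> l = l' -> derivable_pt_lim f x l'.
Proof. intros; subst; auto. Qed.

Lemma mono (f f' : R -> R) a b : a <= b ->
  (forall c, a <= c <= b -> derivable_pt_lim f c (f' c)) ->
  (forall c, a <= c <= b -> 0 <= f' c) -> f a <= f b.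
Proof.
  intros Hab Hd Hp. destruct (Req_dec a b) as [->|Hne]; [lra|].
  destruct (MVT_cor2 f f' a b ltac:(lra) Hd) as [c [Hc Hc2]].
  assert (0 <= f' c) by (apply Hp; lra). nra.
Qed.

Lemma sqrt_lt2 x : 0 <= x < 4 -> sqrt x < 2.
Proof.
  intros H. replace 2 with (sqrt (2^2)) by (apply sqrt_pow2; lra).
  apply sqrt_lt_1_alt. lra.
Qed.

Lemma coef_re t e g z : t <> 0 ->
  Re (Copp (Cmul (Cmul (Cmul (0,t) (0,t)) (Cadd (RtoC e) (Cdiv (Cmul Ci (RtoC g)) (0,t)))) z))
  = (t^2*e + t*g) * Re z.
Proof. intros; destruct z; unfold Re, Im, Copp, Cmul, Cadd, RtoC, Cdiv, Cinv, Ci; simpl; field; auto. Qed.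

Lemma coef_im t e g z : t <> 0 ->
  Im (Copp (Cmul (Cmul (Cmul (0,t) (0,t)) (Cadd (RtoC e) (Cdiv (Cmul Ci (RtoC g)) (0,t)))) z))
  = (t^2*e + t*g) * Im z.
Proof. intros; destruct z; unfold Re, Im, Copp, Cmul, Cadd, RtoC, Cdiv, Cinv, Ci; simpl; field; auto. Qed.

Lemma n0t_axis e0 g0 t : t <> 0 -> 0 < e0 + g0/t ->
  n0t e0 g0 (0,t) = (sqrt (e0 + g0/t), 0).
Proof.
  intros Ht Hc.
  assert (E: Cadd (RtoC e0) (Cdiv (Cmul Ci (RtoC g0)) (0,t)) = (e0 + g0/t, 0)).
  { unfold Re, Im, Copp, Cmul, Cadd, RtoC, Cdiv, Cinv, Ci; simpl; f_equal; field; auto. }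
  unfold n0t; rewrite E. unfold Csqrt, Cmod, Re, Im; simpl.
  replace ((e0 + g0/t) * ((e0 + g0/t) * 1) + 0 * (0 * 1)) with ((e0+g0/t)^2) by ring.
  rewrite sqrt_pow2 by lra.
  replace ((e0 + g0 / t + (e0 + g0 / t)) / 2) with (e0+g0/t) by lra.
  replace ((e0 + g0 / t - (e0 + g0 / t)) / 2) with 0 by lra.
  rewrite sqrt_0. f_equal; ring.
Qed.

Lemma j0_pure Y : j0 (0, Y) = (sinh Y / Y, 0).
Proof.
  unfold j0, Cdiv, Csin, Cmul, Cinv, Re, Im; simpl. rewrite sin_0, cos_0.
  destruct (Req_dec Y 0) as [->|HY].
  - rewrite sinh_0. f_equal; unfold Rdiv; ring.
  - f_equal; field; auto.
Qed.

Lemma dsinhdiv s : s <> 0 ->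
  derivable_pt_lim (fun r => sinh (s*r) / (s*r)) 1 (cosh s - sinh s / s).
Proof.
  intros Hs.
  assert (Hl: forall x, derivable_pt_lim (fun r => s*r) x s).
  { intros x. apply dext with (0 * x + s * 1). apply (dmul (fun _ => s) (fun r => r)).
    apply derivable_pt_lim_const. apply derivable_pt_lim_id. ring. }
  assert (Hsh: derivable_pt_lim (fun r => sinh (s*r)) 1 (cosh (s*1) * s)).
  { apply (derivable_pt_lim_comp (fun r => s*r) sinh). apply Hl. apply derivable_pt_lim_sinh. }
  eapply dext. apply (derivable_pt_lim_div (fun r => sinh (s*r)) (fun r => s*r)).
  exact Hsh. apply Hl. replace (s*1) with s by ring. auto.
  replace (s*1) with s by ring. unfold Rsqr. field. auto.
Qed.

Lemma sinh_cosh s : Rabs (sinh s) < cosh s.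
Proof.
  unfold sinh, cosh. pose proof (exp_pos s). pose proof (exp_pos (-s)).
  apply Rabs_def1; lra.
Qed.

Lemma ode_part eps1 gam1 t y y1 :
  t <> 0 -> (forall r, 0<=r<=1 -> 1 <= t^2*eps1 r + t*gam1 r) ->
  is_sol eps1 gam1 (0,t) y y1 -> y1 1 <> RtoC 0 /\ Cmod (Cdiv (y 1) (y1 1)) < 2.
Proof.
  intros Ht Hq [H0 [H1 Hd]].
  set (q := fun r => t^2*eps1 r + t*gam1 r) in *.
  set (u := fun r => Re (y r)). set (v := fun r => Im (y r)).
  set (up := fun r => Re (y1 r)). set (vp := fun r => Im (y1 r)).
  assert (Du: forall r, 0<=r<=1 -> derivable_pt_lim u r (up r)) by (intros r Hr; apply (Hd r Hr)).
  assert (Dv: forall r, 0<=r<=1 -> derivable_pt_lim v r (vp r)) by (intros r Hr; apply (Hd r Hr)).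
  assert (Dup: forall r, 0<=r<=1 -> derivable_pt_lim up r (q r * u r)).
  { intros r Hr. destruct (Hd r Hr) as [_ [A _]]. unfold up, u, q. rewrite coef_re in A; auto. }
  assert (Dvp: forall r, 0<=r<=1 -> derivable_pt_lim vp r (q r * v r)).
  { intros r Hr. destruct (Hd r Hr) as [_ [_ A]]. unfold vp, v, q. rewrite coef_im in A; auto. }
  assert (u0: u 0 = 0) by (unfold u; rewrite H0; reflexivity).
  assert (v0: v 0 = 0) by (unfold v; rewrite H0; reflexivity).
  assert (up0: up 0 = 1) by (unfold up; rewrite H1; reflexivity).
  assert (vp0: vp 0 = 0) by (unfold vp; rewrite H1; reflexivity).
  assert (W2: 0 <= v 1 * up 1 - u 1 * vp 1).
  { replace 0 with (v 0 * up 0 - u 0 * vp 0) by (rewrite u0, v0; ring).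
    apply (mono (fun r => v r * up r - u r * vp r) (fun _ => 0)); [lra| |intros; lra].
    intros c Hc. eapply dext. apply (dminus (fun r => v r * up r) (fun r => u r * vp r)); apply dmul; auto. ring. }
  assert (W1: v 1 * up 1 - u 1 * vp 1 <= 0).
  { assert (0 <= u 1 * vp 1 - v 1 * up 1); [|lra].
    replace 0 with (u 0 * vp 0 - v 0 * up 0) by (rewrite u0, v0; ring).
    apply (mono (fun r => u r * vp r - v r * up r) (fun _ => 0)); [lra| |intros; lra].
    intros c Hc. eapply dext. apply (dminus (fun r => u r * vp r) (fun r => v r * up r)); apply dmul; auto. ring. }
  assert (Hh: forall r, 0<=r<=1 -> 0 <= u r * up r).
  { intros r Hr. replace 0 with (u 0 * up 0) by (rewrite u0; ring).
    apply (mono (fun r => u r * up r) (fun r => up r * up r + u r * (q r * u r))); [lra| |].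
    - intros c Hc. apply dmul; [apply Du|apply Dup]; lra.
    - intros c Hc. assert (1 <= q c) by (apply Hq; lra). nra. }
  assert (Hphi: 1 <= up 1 * up 1 - u 1 * u 1).
  { enough (up 0 * up 0 - u 0 * u 0 <= up 1 * up 1 - u 1 * u 1) by (rewrite u0, up0 in *; lra).
    apply (mono (fun r => up r * up r - u r * u r)
                (fun r => q r * u r * up r + up r * (q r * u r) - (up r * u r + u r * up r))); [lra| |].
    - intros c Hc. apply (dminus (fun r => up r * up r) (fun r => u r * u r)); apply dmul; auto.
    - intros c Hc. assert (1 <= q c) by (apply Hq; lra). pose proof (Hh c Hc). nra. }
  assert (HW: v 1 * up 1 = u 1 * vp 1) by lra.
  unfold u, v, up, vp in *. clear - HW Hphi.
  destruct (y 1) as [U V]; destruct (y1 1) as [U' V']; unfold Re, Im in *; simpl in *.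
  split.
  - unfold RtoC; intros E; injection E; intros; subst; nra.
  - unfold Cmod, Cdiv, Cmul, Cinv, Re, Im; simpl.
    set (N := U' * (U' * 1) + V' * (V' * 1)).
    assert (HN: 1 <= N) by (unfold N; nra).
    apply sqrt_lt2.
    replace (U * (U' / N) - V * (- V' / N)) with ((U*U' + V*V')/N) by (field; lra).
    replace (U * (- V' / N) + V * (U' / N)) with 0 by (field_simplify; [rewrite HW; field|]; lra).
    assert (HS: U*U + V*V < N).
    { assert (E2: V*U'*(V*U') = U*V'*(U*V')) by (rewrite HW; ring).
      assert (E: (U*U+V*V)*(U'*U') = U*U*N) by (unfold N; lra).
      assert (U*U*N < U'*U'*N) by (apply Rmult_lt_compat_r; lra).
      apply Rmult_lt_reg_r with (U'*U'). nra. lra. }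
    assert (HC: (U*U'+V*V')*(U*U'+V*V') <= (U*U+V*V)*N) by (unfold N; nra).
    split. { set (w := (U*U'+V*V')/N). nra. }
    replace (((U * U' + V * V') / N) * (((U * U' + V * V') / N) * 1) + 0 * (0 * 1))
      with ((U*U'+V*V')*(U*U'+V*V') / (N*N)) by (field; lra).
    apply Rmult_lt_reg_r with (N*N). nra.
    unfold Rdiv. rewrite Rmult_assoc, Rinv_l by nra. nra.
Qed.

Lemma j0_part e0 g0 t : t <> 0 -> 0 < e0 + g0/t -> 4 <= t^2 * (e0+g0/t) -> forall d : Cx,
  Cderiv_lim (fun r => j0 (Cmul (Cmul (0,t) (n0t e0 g0 (0,t))) (RtoC r))) 1 d ->
  d <> RtoC 0 /\ Cmod (Cdiv (j0 (Cmul (0,t) (n0t e0 g0 (0,t)))) d) < 2.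
Proof.
  intros Ht Hc H4 d Hd.
  rewrite n0t_axis in * by auto.
  set (c := e0 + g0/t) in *.
  set (s := t * sqrt c).
  assert (Hs2: 4 <= s*s).
  { unfold s. replace (t * sqrt c * (t * sqrt c)) with (t^2 * (sqrt c ^2)) by ring.
    rewrite pow2_sqrt by lra. lra. }
  assert (Hs0: s <> 0) by (intro E; rewrite E in Hs2; lra).
  assert (Ek: Cmul (0,t) (sqrt c, 0) = (0, s)).
  { unfold Cmul, Re, Im, s; simpl; f_equal; ring. }
  rewrite Ek in *.
  assert (Ef: (fun r => j0 (Cmul (0,s) (RtoC r))) = fun r => (sinh (s*r)/(s*r), 0)).
  { apply functional_extensionality; intros r.
    replace (Cmul (0,s) (RtoC r)) with (0, s*r).
    apply j0_pure. unfold Cmul, RtoC, Re, Im; simpl; f_equal; ring. }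
  rewrite Ef in Hd. destruct Hd as [A B].
  unfold Re, Im in A, B; simpl in A, B.
  pose proof (uniqueness_limite _ _ _ _ A (dsinhdiv s Hs0)) as Ed.
  pose proof (uniqueness_limite _ _ _ _ B (derivable_pt_lim_const 0 1)) as Ei.
  destruct d as [d1 d2]; simpl in Ed, Ei. subst d1 d2.
  rewrite j0_pure.
  pose proof (sinh_cosh s) as HSC.
  set (S := sinh s) in *. set (C := cosh s) in *.
  assert (HC0: 0 < C) by (pose proof (Rabs_pos S); lra).
  assert (Key: S*S < (s*C - S)*(s*C - S)).
  { destruct (Rle_or_lt 0 s) as [Hp|Hn].
    - assert (2 <= s) by nra. apply Rabs_def2 in HSC.
      assert (P1: 0 < s*C) by nra. assert (P2: 0 < s*C - 2*S) by nra.
      pose proof (Rmult_lt_0_compat _ _ P1 P2). nra.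
    - assert (s <= -2) by nra. apply Rabs_def2 in HSC.
      assert (P1: 0 < -(s*C)) by nra. assert (P2: 0 < -(s*C - 2*S)) by nra.
      pose proof (Rmult_lt_0_compat _ _ P1 P2). nra. }
  assert (HD: s*C - S <> 0) by (intro E; rewrite E in Key; nra).
  assert (HD2: C - S/s <> 0).
  { intro E. apply HD. replace (s*C - S) with (s*(C - S/s)) by (field; repeat split; try assumption; try (intro E; apply HD; lra)). rewrite E; ring. }
  split.
  - unfold RtoC; intro E; injection E; intros; auto.
  - unfold Cmod, Cdiv, Cmul, Cinv, Re, Im; simpl.
    apply sqrt_lt2.
    replace (S / s * ((C - S / s) / ((C - S / s) * ((C - S / s) * 1) + 0 * (0 * 1))) - 0 * (- 0 / ((C - S / s) * ((C - S / s) * 1) + 0 * (0 * 1))))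
      with (S / (s*C - S)) by (field; repeat split; try assumption; try (intro E; apply HD; lra)).
    replace (S / s * (- 0 / ((C - S / s) * ((C - S / s) * 1) + 0 * (0 * 1))) + 0 * ((C - S / s) / ((C - S / s) * ((C - S / s) * 1) + 0 * (0 * 1))))
      with 0 by (field; repeat split; try assumption; try (intro E; apply HD; lra)).
    replace (S / (s * C - S) * (S / (s * C - S) * 1) + 0 * (0 * 1)) with ((S*S)/((s*C-S)*(s*C-S))) by (field; repeat split; try assumption; try (intro E; apply HD; lra)).
    split.
    + apply Rmult_le_pos; [nra|]. apply Rlt_le, Rinv_0_lt_compat. nra.
    + apply Rmult_lt_reg_r with ((s*C-S)*(s*C-S)). nra.
      unfold Rdiv. rewrite Rmult_assoc, Rinv_l by nra. nra.
Qed.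

Lemma cont_of (f : R -> R) : twice_diff_01 f -> forall c, 0 <= c <= 1 -> continuity_pt f c.
Proof.
  intros [f1 [f2 H]] c Hc. apply derivable_continuous_pt.
  exists (f1 c). apply (H c Hc).
Qed.

Theorem lemma2p1 (eps0 gam0 : R) (eps1 gam1 : R -> R) :
  0 < eps0 -> 0 < gam0 ->
  (forall r, 0 <= r <= 1 -> 0 < eps1 r /\ 0 < gam1 r) ->
  twice_diff_01 eps1 -> twice_diff_01 gam1 ->
  exists M k0 : R, 0 < M /\ 0 < k0 /\
    forall t : R, k0 < Rabs t ->
      let k : Cx := (0, t) in
      (forall y y1 : R -> Cx, is_sol eps1 gam1 k y y1 ->
         y1 1 <> RtoC 0 /\ Cmod (Cdiv (y 1) (y1 1)) < M) /\
      (forall d : Cx,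
         Cderiv_lim (fun r => j0 (Cmul (Cmul k (n0t eps0 gam0 k)) (RtoC r))) 1 d ->
         d <> RtoC 0 /\
         Cmod (Cdiv (j0 (Cmul k (n0t eps0 gam0 k))) d) < M).
Proof.
  intros He0 Hg0 Hpos Hd1 Hd2.
  destruct (continuity_ab_min eps1 0 1 ltac:(lra) (cont_of eps1 Hd1)) as [mx [Hmx Hmx1]].
  destruct (continuity_ab_maj gam1 0 1 ltac:(lra) (cont_of gam1 Hd2)) as [Mx [HMx HMx1]].
  set (m := eps1 mx) in *. set (G := gam1 Mx) in *.
  assert (Hm: 0 < m) by (apply Hpos; auto).
  assert (HG: 0 < G) by (apply Hpos; auto).
  exists 2, ((G+1)/m + 8/eps0 + 2*gam0/eps0 + 1).
  assert (P1: 0 < (G+1)/m) by (apply Rdiv_lt_0_compat; lra).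
  assert (P2: 0 < 8/eps0) by (apply Rdiv_lt_0_compat; lra).
  assert (P3: 0 < 2*gam0/eps0) by (apply Rdiv_lt_0_compat; lra).
  split; [lra|]. split; [lra|].
  intros t Ht k.
  set (a := Rabs t) in *.
  assert (Ha1: 1 < a) by lra.
  assert (Ht0: t <> 0) by (intro E; unfold a in *; rewrite E, Rabs_R0 in Ht; lra).
  assert (Hat: t*t = a*a) by (unfold a; rewrite <- Rabs_mult; rewrite Rabs_right; nra).
  assert (Hat2: - a <= t <= a) by (unfold a; pose proof (Rle_abs t);
     pose proof (Rabs_Ropp t); pose proof (Rle_abs (-t)); lra).
  assert (Q1: G + 1 < a * m).
  { assert ((G+1)/m < a) by lra.
    apply (Rmult_lt_compat_r m) in H; [|lra]. unfold Rdiv in H.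
    rewrite Rmult_assoc, Rinv_l, Rmult_1_r in H; lra. }
  split.
  - intros y y1 Hs. apply (ode_part eps1 gam1 t); auto.
    intros r Hr. destruct (Hpos r Hr) as [Hp1 Hp2].
    assert (m <= eps1 r) by (apply Hmx; auto).
    assert (gam1 r <= G) by (apply HMx; auto).
    assert (t * gam1 r >= - a * gam1 r) by nra.
    assert (t^2 * eps1 r >= a*a*m) by (replace (t^2) with (a*a) by (rewrite <- Hat; ring); nra).
    nra.
  - intros d Hd.
    assert (Q2: gam0 / a < eps0 / 2).
    { assert (2*gam0/eps0 < a) by lra.
      apply Rmult_lt_reg_r with (2*a/eps0). apply Rdiv_lt_0_compat; lra.
      replace (gam0 / a * (2 * a / eps0)) with (2*gam0/eps0) by (field; lra).
      replace (eps0 / 2 * (2 * a / eps0)) with a by (field; lra). lra. }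
    assert (Q3: - (gam0/a) <= gam0 / t).
    { destruct (Rle_or_lt 0 t).
      - assert (0 < gam0/t) by (apply Rdiv_lt_0_compat; lra).
        assert (0 < gam0/a) by (apply Rdiv_lt_0_compat; lra). lra.
      - replace a with (-t) by (unfold a; rewrite Rabs_left; auto).
        replace (gam0 / - t) with (- (gam0/t)) by (field; lra). lra. }
    assert (Hc: eps0 / 2 < eps0 + gam0/t) by lra.
    assert (Q4: 8/eps0 < a) by lra.
    assert (Q5: 8 < a * eps0).
    { apply (Rmult_lt_compat_r eps0) in Q4; [|lra]. unfold Rdiv in Q4.
      rewrite Rmult_assoc, Rinv_l, Rmult_1_r in Q4; lra. }
    apply j0_part; auto. lra.
    replace (t^2) with (a*a) by (rewrite <- Hat; ring). nra.
Qed.
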